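(* A finite simple graph $G$ admits an $\mathcal{F}$-free circular ordering if and only if $G$ is a forest.
   Context: A circular ordering of a finite set is obtained by placing its elements at distinct points of a circle; it is the set of triples $(x,y,z)$ of distinct elements such that clockwise from $x$ one meets $y$ before $z$. A circularly ordered graph is a graph together with a circular ordering of its vertices; isomorphism means a graph isomorphism preserving the circular orderings; $(H,C_H)$ is an induced circularly ordered subgraph of $(G,C_G)$ if $H$ is an induced subgraph of $G$ and $C_H$ is the restriction of $C_G$. A graph $G$ admits an $\mathcal{F}$-free circular ordering if there is a circular ordering $C$ of $V(G)$ such that no induced circularly ordered subgraph of $(G,C)$ is isomorphic to a member of $\mathcal{F}$. Here $\mathcal{F}$ consists of the following seven circularly ordered graphs, where in each case the vertices $v_1,v_2,\dots$ appear clockwise in this order and the listed edges are all the edges: (1) the triangle on $v_1,v_2,v_3$; (2) on $v_1,\dots,v_4$, edges $v_1v_2,v_2v_3,v_3v_4,v_4v_1$; (3) on $v_1,\dots,v_4$, edges $v_1v_2,v_2v_4,v_4v_3,v_3v_1$; (4) on $v_1,\dots,v_4$, edges $v_1v_3,v_2v_4$; (5) on $v_1,\dots,v_4$, edges $v_1v_3,v_1v_4,v_2v_4$; (6) on $v_1,\dots,v_5$, edges $v_1v_2,v_2v_3,v_3v_4,v_4v_5,v_5v_1$; (7) on $v_1,\dots,v_5$, edges $v_1v_2,v_2v_3,v_3v_4,v_4v_5$. *)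

(* Defs.v *)
From mathcomp Require Import all_boot.
Set Implicit Arguments. Unset Strict Implicit. Unset Printing Implicit Defensive.

(* A finite simple graph: vertex type T : finType, symmetric irreflexive e. *)

(* A circular ordering of T is represented by an injective placement
   pos : T -> nat (vertices placed clockwise in increasing order of pos,
   wrapping around).  cyc pos x y z : clockwise from x one meets y before z. *)
Definition cyc (T : Type) (pos : T -> nat) (x y z : T) : bool :=
  [|| (pos x < pos y < pos z)%N, (pos y < pos z < pos x)%N
    | (pos z < pos x < pos y)%N].

Definition pat_edge (k : nat) (E : seq (nat * nat)) (i j : 'I_k) : bool :=
  ((nat_of_ord i, nat_of_ord j) \in E) || ((nat_of_ord j, nat_of_ord i) \in E).

Definition contains_pattern (T : finType) (e : rel T) (pos : T -> nat)
    (k : nat) (E : seq (nat * nat)) : Prop :=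
  exists f : 'I_k -> T,
    [/\ injective f,
        (forall i j l : 'I_k, (i < j < l)%N -> cyc pos (f i) (f j) (f l))
      & (forall i j : 'I_k, i != j -> e (f i) (f j) = pat_edge E i j)].

Definition F_patterns : seq (nat * seq (nat * nat)) :=
  [:: (3, [:: (0,1); (1,2); (2,0)]);
      (4, [:: (0,1); (1,2); (2,3); (3,0)]);
      (4, [:: (0,1); (1,3); (3,2); (2,0)]);
      (4, [:: (0,2); (1,3)]);
      (4, [:: (0,2); (0,3); (1,3)]);
      (5, [:: (0,1); (1,2); (2,3); (3,4); (4,0)]);
      (5, [:: (0,1); (1,2); (2,3); (3,4)])]%N.

Definition F_free (T : finType) (e : rel T) (pos : T -> nat) : Prop :=
  forall P, P \in F_patterns -> ~ contains_pattern e pos P.1 P.2.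

Definition admits_F_free_circular_ordering (T : finType) (e : rel T) : Prop :=
  exists pos : T -> nat, injective pos /\ F_free e pos.

Definition forest (T : finType) (e : rel T) : Prop :=
  ~ exists s : seq T, [/\ (3 <= size s)%N, uniq s & cycle e s].

(* Main.v *)
Require Import Defs.
From mathcomp Require Import all_boot.
From mathcomp Require Import zify.
Set Implicit Arguments. Unset Strict Implicit. Unset Printing Implicit Defensive.

Definition cyc4 (T : Type) (p : T -> nat) a b c d :=
  [&& cyc p a b c, cyc p a b d, cyc p a c d & cyc p b c d].
Definition cyc5 (T : Type) (p : T -> nat) a b c d x :=
  cyc4 p a b c d && [&& cyc p a b x, cyc p a c x, cyc p a d x, cyc p b c x,
                        cyc p b d x & cyc p c d x].
Definition pe (E : seq (nat * nat)) (i j : nat) := ((i, j) \in E) || ((j, i) \in E).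

Lemma cyc_neq (T : eqType) (p : T -> nat) x y z :
  cyc p x y z -> [&& x != y, y != z & x != z].
Proof.
move=> H; apply/and3P; split; apply/eqP => E; subst; move: H; rewrite /cyc; lia.
Qed.

Lemma mk_pat (T : finType) (e : rel T) (p : T -> nat) k E (s : seq T) x0 :
  symmetric e -> size s = k -> uniq s ->
  (forall i j l, i < j -> j < l -> l < k ->
     cyc p (nth x0 s i) (nth x0 s j) (nth x0 s l)) ->
  (forall i j, i < j -> j < k -> e (nth x0 s i) (nth x0 s j) = pe E i j) ->
  contains_pattern e p k E.
Proof.
move=> sym Hs Hu Hc He.
exists (fun i : 'I_k => nth x0 s i); split.
- move=> i j /eqP; rewrite nth_uniq ?Hs // => /eqP; exact: val_inj.
- by move=> i j l /andP [h1 h2]; apply: Hc.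
- move=> i j ne; rewrite /pat_edge -/(pe E i j).
  case: (ltngtP i j) => h.
  + by apply: He.
  + by rewrite sym He // /pe orbC.
  + by move: ne; rewrite -(inj_eq val_inj) /= h eqxx.
Qed.

Lemma pat3 (T : finType) (e : rel T) (p : T -> nat) E a b c :
  symmetric e -> cyc p a b c ->
  e a b = pe E 0 1 -> e a c = pe E 0 2 -> e b c = pe E 1 2 ->
  contains_pattern e p 3 E.
Proof.
move=> sym H h01 h02 h12.
have /and3P [n1 n2 n3] := cyc_neq H.
apply: (@mk_pat _ _ _ _ _ [:: a; b; c] a) => //.
- by rewrite /= !inE !negb_or n1 n3 n2.
- by move=> [|[|[|i]]] [|[|[|j]]] [|[|[|l]]] h1 h2 h3 //; lia.
- by move=> [|[|[|i]]] [|[|[|j]]] h1 h2 //; lia.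
Qed.

Lemma pat4 (T : finType) (e : rel T) (p : T -> nat) E a b c d :
  symmetric e -> cyc4 p a b c d ->
  e a b = pe E 0 1 -> e a c = pe E 0 2 -> e a d = pe E 0 3 ->
  e b c = pe E 1 2 -> e b d = pe E 1 3 -> e c d = pe E 2 3 ->
  contains_pattern e p 4 E.
Proof.
move=> sym H h01 h02 h03 h12 h13 h23.
have H' := H; case/and4P: H' => c1 c2 c3 c4.
have /and3P [n1 n2 n3] := cyc_neq c1.
have /and3P [n4 n5 n6] := cyc_neq c4.
have /and3P [n7 n8 n9] := cyc_neq c3.
apply: (@mk_pat _ _ _ _ _ [:: a; b; c; d] a) => //.
- by rewrite /= !inE !negb_or n1 n3 n9 n2 n6 n5.
- by move=> [|[|[|[|i]]]] [|[|[|[|j]]]] [|[|[|[|l]]]] h1 h2 h3 //; lia.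
- by move=> [|[|[|[|i]]]] [|[|[|[|j]]]] h1 h2 //; lia.
Qed.

Lemma pat5 (T : finType) (e : rel T) (p : T -> nat) E a b c d x :
  symmetric e -> cyc5 p a b c d x ->
  e a b = pe E 0 1 -> e a c = pe E 0 2 -> e a d = pe E 0 3 -> e a x = pe E 0 4 ->
  e b c = pe E 1 2 -> e b d = pe E 1 3 -> e b x = pe E 1 4 ->
  e c d = pe E 2 3 -> e c x = pe E 2 4 -> e d x = pe E 3 4 ->
  contains_pattern e p 5 E.
Proof.
move=> sym H h01 h02 h03 h04 h12 h13 h14 h23 h24 h34.
have H' := H; case/andP: H' => /and4P [c1 c2 c3 c4] /and5P [c5 c6 c7 c8 /andP [c9 c10]].
have /and3P [n1 n2 n3] := cyc_neq c1.
have /and3P [n4 n5 n6] := cyc_neq c4.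
have /and3P [n7 n8 n9] := cyc_neq c3.
have /and3P [m1 m2 m3] := cyc_neq c5.
have /and3P [m4 m5 m6] := cyc_neq c8.
have /and3P [m7 m8 m9] := cyc_neq c10.
apply: (@mk_pat _ _ _ _ _ [:: a; b; c; d; x] a) => //.
- by rewrite /= !inE !negb_or n1 n3 n9 m3 n2 n6 m6 n5 m9 m8.
- by move=> [|[|[|[|[|i]]]]] [|[|[|[|[|j]]]]] [|[|[|[|[|l]]]]] h1 h2 h3 //; lia.
- by move=> [|[|[|[|[|i]]]]] [|[|[|[|[|j]]]]] h1 h2 //; lia.
Qed.


Ltac clia := unfold cyc5, cyc4, cyc in *; lia.

Ltac et sym := match goal with |- _ = ?R =>
  first [ have ->: R = true by []; first [ done | by rewrite sym ]
        | have ->: R = false by []; first [ done | by rewrite sym | by apply/negbTE | by rewrite sym; apply/negbTE ] ] end.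

Definition ctx (T : finType) (e : rel T) (pos : T -> nat) :=
  [/\ symmetric e, irreflexive e, injective pos & F_free e pos].

Lemma noP (T : finType) (e : rel T) pos k E :
  ctx e pos -> (k, E) \in F_patterns -> ~ contains_pattern e pos k E.
Proof. by case=> _ _ _ H /H. Qed.

Lemma pneq (T : finType) (e : rel T) pos x y :
  ctx e pos -> x != y -> pos x != pos y.
Proof. by case=> _ _ inj _; rewrite (inj_eq inj). Qed.

Lemma eneq (T : finType) (e : rel T) pos x y :
  ctx e pos -> e x y -> pos x != pos y.
Proof.
move=> C h; apply: (pneq C); apply/eqP => E; subst.
by case: C => _ irr _ _; rewrite irr in h.
Qed.

Lemma noTri (T : finType) (e : rel T) pos a b c :
  ctx e pos -> e a b -> e b c -> e c a -> False.
Proof.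
move=> C hab hbc hca.
have sym : symmetric e by case: C.
have n1 := eneq C hab; have n2 := eneq C hbc; have n3 := eneq C hca.
have : cyc pos a b c || cyc pos a c b by clia.
case/orP => h.
- apply: (noP C (k := 3) (E := [:: (0,1); (1,2); (2,0)])) => //.
  by apply: (pat3 sym h); et sym.
- apply: (noP C (k := 3) (E := [:: (0,1); (1,2); (2,0)])) => //.
  by apply: (pat3 sym h); et sym.
Qed.

Lemma noC4 (T : finType) (e : rel T) pos a b c d :
  ctx e pos -> e a b -> e b c -> e c d -> e d a -> a != c -> b != d -> False.
Proof.
move=> C hab hbc hcd hda nac nbd.
have sym : symmetric e by case: C.
have hac : ~~ e a c.
  by apply/negP => h; apply: (noTri C hab hbc); rewrite sym.
have hbd : ~~ e b d.
  by apply/negP => h; apply: (noTri C hbc hcd); rewrite sym.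
have n1 := eneq C hab; have n2 := eneq C hbc; have n3 := eneq C hcd.
have n4 := eneq C hda; have n5 := pneq C nac; have n6 := pneq C nbd.
have n7 : pos b != pos d by [].
have n8 : pos a != pos c by [].
have [h|h] : cyc pos a b c \/ cyc pos a c b by clia.
- have : [|| cyc pos a d b, cyc pos b d c | cyc pos c d a] by clia.
  case/orP => [hd|/orP [hd|hd]].
  + apply: (noP C (k := 4) (E := [:: (0,1); (1,3); (3,2); (2,0)])) => //.
    have h' : cyc4 pos b c a d by clia.
    by apply: (pat4 sym h'); et sym.
  + apply: (noP C (k := 4) (E := [:: (0,1); (1,3); (3,2); (2,0)])) => //.
    have h' : cyc4 pos a b d c by clia.
    by apply: (pat4 sym h'); et sym.
  + apply: (noP C (k := 4) (E := [:: (0,1); (1,2); (2,3); (3,0)])) => //.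
    have h' : cyc4 pos a b c d by clia.
    by apply: (pat4 sym h'); et sym.
- have : [|| cyc pos a d c, cyc pos c d b | cyc pos b d a] by clia.
  case/orP => [hd|/orP [hd|hd]].
  + apply: (noP C (k := 4) (E := [:: (0,1); (1,2); (2,3); (3,0)])) => //.
    have h' : cyc4 pos a d c b by clia.
    by apply: (pat4 sym h'); et sym.
  + apply: (noP C (k := 4) (E := [:: (0,1); (1,3); (3,2); (2,0)])) => //.
    have h' : cyc4 pos c d b a by clia.
    by apply: (pat4 sym h'); et sym.
  + apply: (noP C (k := 4) (E := [:: (0,1); (1,3); (3,2); (2,0)])) => //.
    have h' : cyc4 pos c b d a by clia.
    by apply: (pat4 sym h'); et sym.
Qed.

Ltac ee sym := first [ done | by rewrite sym | by rewrite eq_sym ].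

Lemma noCross (T : finType) (e : rel T) pos a c b d :
  ctx e pos -> cyc4 pos a c b d -> e a b -> e c d -> False.
Proof.
move=> C h hab hcd.
have sym : symmetric e by case: C.
have h' := h; case/and4P: h' => c1 c2 c3 c4.
have /and3P [n1 n2 n3] := cyc_neq c1.
have /and3P [n4 n5 n6] := cyc_neq c4.
have /and3P [n7 n8 n9] := cyc_neq c3.
have hr1 : cyc4 pos c b d a by clia.
have hr2 : cyc4 pos b d a c by clia.
have hr3 : cyc4 pos d a c b by clia.
case Hac: (e a c); case Had: (e a d); case Hcb: (e c b); case Hbd: (e b d);
first [ by apply: (noTri C (a:=a) (b:=c) (c:=d)); ee sym
      | by apply: (noTri C (a:=a) (b:=c) (c:=b)); ee sym
      | by apply: (noTri C (a:=a) (b:=b) (c:=d)); ee sym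
      | by apply: (noTri C (a:=c) (b:=b) (c:=d)); ee sym
      | by apply: (noC4 C (a:=a) (b:=b) (c:=d) (d:=c)); ee sym
      | by apply: (noC4 C (a:=a) (b:=b) (c:=c) (d:=d)); ee sym
      | by apply: (noP C (k := 4) (E := [:: (0,2); (1,3)])) => //;
           apply: (pat4 sym h); et sym
      | by apply: (noP C (k := 4) (E := [:: (0,2); (0,3); (1,3)])) => //;
           apply: (pat4 sym h); et sym
      | by apply: (noP C (k := 4) (E := [:: (0,2); (0,3); (1,3)])) => //;
           apply: (pat4 sym hr1); et sym
      | by apply: (noP C (k := 4) (E := [:: (0,2); (0,3); (1,3)])) => //;
           apply: (pat4 sym hr2); et sym
      | by apply: (noP C (k := 4) (E := [:: (0,2); (0,3); (1,3)])) => //;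
           apply: (pat4 sym hr3); et sym ].
Qed.


Lemma chainA (T : Type) (p : T -> nat) a b c d x :
  cyc p a b c -> cyc p a c d -> cyc p a d x -> cyc5 p a b c d x.
Proof. move=> *; rewrite /cyc5 /cyc4; repeat (apply/andP; split); clia. Qed.
Lemma stepA (T : Type) (p : T -> nat) a b c x : p a != p x -> p b != p x -> p c != p x ->
  cyc p a b c -> ~~ cyc p a x b -> ~~ cyc p b x c -> cyc p c x a.
Proof. clia. Qed.
Lemma stepB (T : Type) (p : T -> nat) a c d x : p a != p x -> p c != p x -> p d != p x ->
  cyc p a c d -> cyc p c x a -> ~~ cyc p c x d -> cyc p a d x.
Proof. clia. Qed.
Lemma s1 (T : Type) (p : T -> nat) a b c : p a != p b -> p a != p c -> p b != p c ->
  ~~ cyc p a c b -> cyc p a b c.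
Proof. clia. Qed.
Lemma s2 (T : Type) (p : T -> nat) a b c d : p a != p d -> p b != p d -> p c != p d ->
  cyc p a b c -> cyc p b c d -> ~~ cyc p a d b -> cyc4 p a b c d.
Proof. clia. Qed.
Lemma mix1 (T : Type) (p : T -> nat) a b c : p a != p b -> p a != p c -> p b != p c ->
  ~~ cyc p a c b -> ~~ cyc p c a b -> False.
Proof. clia. Qed.
Lemma mix2 (T : Type) (p : T -> nat) a b c : p a != p b -> p a != p c -> p b != p c ->
  ~~ cyc p b c a -> ~~ cyc p b a c -> False.
Proof. clia. Qed.
Lemma sw (T : Type) (p : T -> nat) a b x y : p a != p b -> p a != p x -> p a != p y ->
  p b != p x -> p b != p y -> p x != p y ->
  cyc p a x b != cyc p a y b -> cyc4 p a x b y || cyc4 p a y b x.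
Proof. clia. Qed.

Lemma chain5 (T : Type) (p : T -> nat) a b c d x :
  p a != p b -> p a != p c -> p a != p d -> p a != p x -> p b != p c ->
  p b != p d -> p b != p x -> p c != p d -> p c != p x -> p d != p x ->
  ~~ cyc p a c b -> ~~ cyc p b d c -> ~~ cyc p a d b ->
  ~~ cyc p a x b -> ~~ cyc p b x c -> ~~ cyc p c x d -> cyc5 p a b c d x.
Proof.
move=> ab ac ad ax bc bd bx cd cx dx h1 h2 h3 h4 h5 h6.
have g1 := s1 ab ac bc h1.
have g2 := s1 bc bd cd h2.
have /and4P [_ _ g3 _] := s2 ad bd cd g1 g2 h3.
have g4 := stepA ax bx cx g1 h4 h5.
have g5 := stepB ax cx dx g3 g4 h6.
exact: chainA g1 g3 g5.
Qed.

Lemma side (T : finType) (e : rel T) pos a b :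
  ctx e pos -> e a b -> forall p x, path e x p -> a \notin x :: p -> b \notin x :: p ->
  forall z, z \in x :: p -> cyc pos a z b = cyc pos a x b.
Proof.
move=> C hab; elim=> [|y q IH] x.
  by move=> _ _ _ z; rewrite inE => /eqP ->.
rewrite /= => /andP [hxy hp] ha hb.
have ha' : a \notin y :: q by move: ha; rewrite !inE !negb_or => /andP [].
have hb' : b \notin y :: q by move: hb; rewrite !inE !negb_or => /andP [].
have IH' := IH y hp ha' hb'.
have eq : cyc pos a y b = cyc pos a x b.
  move: ha hb; rewrite !inE !negb_or => /and3P [ax ay _] /and3P [bx b_y _].
  have n1 := eneq C hab; have n2 := eneq C hxy.
  have n3 := pneq C ax; have n4 := pneq C ay; have n5 := pneq C bx; have n6 := pneq C b_y.
  apply/eqP; apply/negPn/negP => hne.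
  have := sw n1 n4 n3 n6 n5 _ hne; rewrite eq_sym in n2 => /(_ n2).
  case/orP => h4.
  - by apply: (noCross C h4 hab); case: C => sym _ _ _; rewrite sym.
  - exact: (noCross C h4 hab hxy).
move=> z; rewrite inE => /orP [/eqP -> //|hz].
by rewrite IH' // eq.
Qed.

Lemma edge_core (T : finType) (e : rel T) pos a b c q :
  ctx e pos -> uniq [:: a, b, c & q] -> cycle e [:: a, b, c & q] ->
  (forall z, z \in [:: a, b, c & q] -> ~~ cyc pos a z b) \/
  (forall z, z \in [:: a, b, c & q] -> ~~ cyc pos b z a).
Proof.
move=> C hu; rewrite /cycle /= rcons_path => /and4P [hab hbc hp _].
have ha : a \notin c :: q.
  by move: hu => /andP [H _]; apply: contra H => h; rewrite inE h orbT.
have hb : b \notin c :: q by move: hu => /andP [_ /andP [H _]].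
have S := side C hab hp ha hb.
have nab : pos a != pos b := eneq C hab.
case hc: (cyc pos a c b); [right|left] => z; rewrite !inE => /or3P [/eqP->|/eqP->|hz].
- by clear -nab; clia.
- by clear -nab; clia.
- have := S z; rewrite inE hz hc => /(_ isT) h; clear -h; clia.
- by clear -nab; clia.
- by clear -nab; clia.
- by have := S z; rewrite inE hz hc => /(_ isT) ->.
Qed.

Lemma edge_empty (T : finType) (e : rel T) pos s p1 a b p2 :
  ctx e pos -> s = p1 ++ [:: a, b & p2] -> 3 <= size s -> uniq s -> cycle e s ->
  (forall z, z \in s -> ~~ cyc pos a z b) \/ (forall z, z \in s -> ~~ cyc pos b z a).
Proof.
move=> C -> hs hu hc.
have R := rot_size_cat p1 [:: a, b & p2].
have hu' := hu; rewrite -(rot_uniq (size p1)) R in hu'.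
have hc' := hc; rewrite -(rot_cycle (size p1)) R in hc'.
rewrite !cat_cons in hu' hc'.
case E: (p2 ++ p1) hu' hc' => [|c q] hu' hc'.
  by move: hs; rewrite size_cat /=; have := congr1 size E; rewrite size_cat /=; lia.
have M : forall z, (z \in p1 ++ [:: a, b & p2]) = (z \in [:: a, b, c & q]).
  by move=> z; rewrite -(mem_rot (size p1)) R /= E.
case: (edge_core C hu' hc') => H; [left|right] => z; rewrite M; exact: H.
Qed.

Lemma finish5 (T : finType) (e : rel T) pos a b c d x :
  ctx e pos -> cyc5 pos a b c d x -> e a b -> e b c -> e c d -> e d x -> False.
Proof.
move=> C h hab hbc hcd hdx.
have sym : symmetric e by case: C.
have h' := h; case/andP: h' => /and4P [c1 c2 c3 c4] /and5P [c5 c6 c7 c8 /andP [c9 c10]].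
have /and3P [n1 n2 n3] := cyc_neq c1.
have /and3P [n4 n5 n6] := cyc_neq c4.
have /and3P [n7 n8 n9] := cyc_neq c3.
have /and3P [m1 m2 m3] := cyc_neq c5.
have /and3P [m4 m5 m6] := cyc_neq c8.
have /and3P [m7 m8 m9] := cyc_neq c10.
have hac : ~~ e a c by apply/negP => hh; apply: (noTri C hab hbc); rewrite sym.
have hbd : ~~ e b d by apply/negP => hh; apply: (noTri C hbc hcd); rewrite sym.
have hcx : ~~ e c x by apply/negP => hh; apply: (noTri C hcd hdx); rewrite sym.
have had : ~~ e a d by apply/negP => hh; apply: (noC4 C hab hbc hcd) => //; rewrite sym.
have hbx : ~~ e b x by apply/negP => hh; apply: (noC4 C hbc hcd hdx) => //; rewrite sym.
case hax: (e a x).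
- apply: (noP C (k := 5) (E := [:: (0,1); (1,2); (2,3); (3,4); (4,0)])) => //.
  by apply: (pat5 sym h); et sym.
- apply: (noP C (k := 5) (E := [:: (0,1); (1,2); (2,3); (3,4)])) => //.
  by apply: (pat5 sym h); et sym.
Qed.

Lemma dir1 (T : finType) (e : rel T) pos : ctx e pos -> forest e.
Proof.
move=> C [s [hs hu hc]].
have sym : symmetric e by case: C.
case: s hs hu hc => [|x0 [|x1 [|x2 [|x3 [|x4 q]]]]] // hs hu hc.
- move: hc; rewrite /cycle /= => /and4P [h01 h12 h20 _].
  exact: (noTri C h01 h12 h20).
- move: hc; rewrite /cycle /= => /and5P [h01 h12 h23 h30 _].
  move: hu; rewrite /= !inE !negb_or => /and4P [/and3P [_ n02 _] /andP [_ n13] _ _].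
  exact: (noC4 C h01 h12 h23 h30 n02 n13).
have hc0 := hc.
move: hc0; rewrite /cycle /= => /and5P [h01 h12 h23 h34 _].
have hu0 := hu.
move: hu0; rewrite /= !inE !negb_or => /and5P [/and5P [d01 d02 d03 d04 _]
  /and4P [d12 d13 d14 _] /and3P [d23 d24 _] /andP [d34 _] _].
have p01 := pneq C d01; have p02 := pneq C d02; have p03 := pneq C d03;
have p04 := pneq C d04; have p12 := pneq C d12; have p13 := pneq C d13;
have p14 := pneq C d14; have p23 := pneq C d23; have p24 := pneq C d24;
have p34 := pneq C d34.
set s := [:: x0, x1, x2, x3, x4 & q] in hs hu hc.
have m0 : x0 \in s by rewrite !inE eqxx.
have m1 : x1 \in s by rewrite !inE eqxx ?orbT.
have m2 : x2 \in s by rewrite !inE eqxx ?orbT.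
have m3 : x3 \in s by rewrite !inE eqxx ?orbT.
have m4 : x4 \in s by rewrite !inE eqxx ?orbT.
have O01 := edge_empty (p1 := [::]) (a := x0) (b := x1) (p2 := [:: x2, x3, x4 & q]) C erefl hs hu hc.
have O12 := edge_empty (p1 := [:: x0]) (a := x1) (b := x2) (p2 := [:: x3, x4 & q]) C erefl hs hu hc.
have O23 := edge_empty (p1 := [:: x0; x1]) (a := x2) (b := x3) (p2 := [:: x4 & q]) C erefl hs hu hc.
have O34 := edge_empty (p1 := [:: x0; x1; x2]) (a := x3) (b := x4) (p2 := q) C erefl hs hu hc.
case: O01 => [F01|B01]; case: O12 => [F12|B12].
- case: O23 => [F23|B23]; last first.
    by apply: (mix1 p12 p13 p23 (F12 _ m3) (B23 _ m1)).
  case: O34 => [F34|B34]; last first.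
    by apply: (mix1 p23 p24 p34 (F23 _ m4) (B34 _ m2)).
  have := chain5 p01 p02 p03 p04 p12 p13 p14 p23 p24 p34 (F01 _ m2) (F12 _ m3)
    (F01 _ m3) (F01 _ m4) (F12 _ m4) (F23 _ m4).
  by move/(finish5 C); apply.
- by apply: (mix1 p01 p02 p12 (F01 _ m2) (B12 _ m0)).
- by apply: (mix2 p01 p02 p12 (B01 _ m2) (F12 _ m0)).
- case: O23 => [F23|B23].
    by apply: (mix2 p12 p13 p23 (B12 _ m3) (F23 _ m1)).
  case: O34 => [F34|B34].
    by apply: (mix2 p23 p24 p34 (B23 _ m4) (F34 _ m2)).
  rewrite eq_sym in p01.
  rewrite eq_sym in p02.
  rewrite eq_sym in p03.
  rewrite eq_sym in p04.
  rewrite eq_sym in p12.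
  rewrite eq_sym in p13.
  rewrite eq_sym in p14.
  rewrite eq_sym in p23.
  rewrite eq_sym in p24.
  rewrite eq_sym in p34.
  have := chain5 p34 p24 p14 p04 p23 p13 p03 p12 p02 p01 (B34 _ m2) (B23 _ m1)
    (B34 _ m1) (B34 _ m0) (B23 _ m0) (B12 _ m0).
  move/(finish5 C); apply; by rewrite sym.
Qed.


Definition Inv (T : finType) (e : rel T) (S : {set T}) (pos : T -> nat) (col : T -> bool) :=
 [/\ {in S &, injective pos},
     (forall a c b d, a \in S -> c \in S -> b \in S -> d \in S ->
        cyc4 pos a c b d -> e a b -> e c d -> False),
     (forall x1 x2 x3 x4, x1 \in S -> x2 \in S -> x3 \in S -> x4 \in S ->
        cyc4 pos x1 x2 x3 x4 -> e x1 x2 -> e x2 x3 -> e x3 x4 -> col x1) &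
     (forall x y, x \in S -> y \in S -> e x y -> col x != col y)].

Definition ins (T : eqType) (pos : T -> nat) v q x := if x == v then q else pos x * 2 + 2.

Lemma cyc_ins (T : eqType) (pos : T -> nat) v q x y z :
  x != v -> y != v -> z != v -> cyc (ins pos v q) x y z = cyc pos x y z.
Proof.
move=> hx hy hz; rewrite /cyc /ins (negbTE hx) (negbTE hy) (negbTE hz).
by apply/idP/idP; lia.
Qed.

Lemma cyc4_ins (T : eqType) (pos : T -> nat) v q a b c d :
  a != v -> b != v -> c != v -> d != v -> cyc4 (ins pos v q) a b c d = cyc4 pos a b c d.
Proof. by move=> ha hb hc hd; rewrite /cyc4 !cyc_ins. Qed.

Lemma opp1 (T : Type) (p : T -> nat) x y c d :
  p x = p y + 1 \/ p y = p x + 1 -> cyc4 p x c y d -> False.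
Proof. clia. Qed.
Lemma opp2 (T : Type) (p : T -> nat) x y c d :
  p x = p y + 1 \/ p y = p x + 1 -> cyc4 p c x d y -> False.
Proof. clia. Qed.
Lemma adjA (T : Type) (p : T -> nat) v u c d :
  p v = p u + 1 -> cyc4 p v u c d -> False.
Proof. clia. Qed.
Lemma adjB (T : Type) (p : T -> nat) v u a b :
  p u = p v + 1 -> cyc4 p a b u v -> False.
Proof. clia. Qed.
Lemma rep1 (T : Type) (p : T -> nat) a b d : cyc4 p a b a d -> False.
Proof. clia. Qed.
Lemma rep2 (T : Type) (p : T -> nat) a b c : cyc4 p a b c b -> False.
Proof. clia. Qed.

Lemma extend (T : finType) (e : rel T) (S0 : {set T}) pos col v u :
  symmetric e -> irreflexive e ->
  Inv e S0 pos col -> v \notin S0 -> u \in S0 -> e v u ->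
  (forall y, y \in S0 -> e v y -> y = u) ->
  Inv e (v |: S0) (ins pos v (if col u then pos u * 2 + 3 else pos u * 2 + 1))
      (fun x => if x == v then ~~ col u else col x).
Proof.
move=> sym irr [inj cr p4 pc] vS uS evu nb0.
set q := (if col u then _ else _).
set P := ins pos v q.
have uv : u != v by apply: contraNneq vS => <-.
have Pv : P v = q by rewrite /P /ins eqxx.
have Pu : P u = pos u * 2 + 2 by rewrite /P /ins (negbTE uv).
have nb : forall y, y \in v |: S0 -> e v y -> y = u.
  move=> y; rewrite in_setU1 => /orP [/eqP -> | hy]; last exact: nb0.
  by rewrite irr.
have nb' : forall y, y \in v |: S0 -> e y v -> y = u.
  by move=> y hy; rewrite sym; apply: nb.
have Adj : P v = P u + 1 \/ P u = P v + 1.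
  by rewrite Pv Pu /q; case: (col u); [left|right]; lia.
have Adj' : P u = P v + 1 \/ P v = P u + 1 by case: Adj; [right|left].
have mem0 : forall x, x \in v |: S0 -> x != v -> x \in S0.
  by move=> x; rewrite in_setU1 => /orP [/eqP -> |//]; rewrite eqxx.
split.
- move=> x y hx hy; rewrite /P /ins.
  case: (eqVneq x v) => [->|xv]; case: (eqVneq y v) => [->|yv] //.
  + by rewrite /q; case: (col u) => E; exfalso; lia.
  + by rewrite /q; case: (col u) => E; exfalso; lia.
  + by move=> E; apply: inj; [exact: mem0|exact: mem0|lia].
- move=> a c b d ha hc hb hd h4 hab hcd.
  case: (eqVneq a v) => [Ea|na].
    by subst a; have Eb := nb b hb hab; subst b; apply: (opp1 Adj h4).
  case: (eqVneq b v) => [Eb|nb1].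
    by subst b; have Ea := nb' a ha hab; subst a; apply: (opp1 Adj' h4).
  case: (eqVneq c v) => [Ec|nc].
    by subst c; have Ed := nb d hd hcd; subst d; apply: (opp2 Adj h4).
  case: (eqVneq d v) => [Ed|nd].
    by subst d; have Ec := nb' c hc hcd; subst c; apply: (opp2 Adj' h4).
  rewrite /P cyc4_ins // in h4.
  exact: (cr a c b d (mem0 _ ha na) (mem0 _ hc nc) (mem0 _ hb nb1) (mem0 _ hd nd) h4 hab hcd).
- move=> x1 x2 x3 x4 h1 h2 h3 h4 hc e12 e23 e34.
  case: (eqVneq x1 v) => [E1|n1].
    subst x1; have E2 := nb x2 h2 e12; subst x2; idtac.
    case cu: (col u) => //; exfalso.
    by apply: (adjA _ hc); rewrite Pv Pu /q cu -addnA.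
  case: (eqVneq x2 v) => [E2|n2].
    subst x2; have E1 := nb' x1 h1 e12; have E3 := nb x3 h3 e23; subst x1 x3.
    by case: (rep1 hc).
  case: (eqVneq x3 v) => [E3|n3].
    subst x3; have E2 := nb' x2 h2 e23; have E4 := nb x4 h4 e34; subst x2 x4.
    by case: (rep2 hc).
  rewrite /= ?(negbTE n1).
  case: (eqVneq x4 v) => [E4|n4].
    subst x4; have E3 := nb' x3 h3 e34; subst x3.
    case cu: (col u); last first.
      by exfalso; apply: (adjB _ hc); rewrite Pv Pu /q cu -addnA.
    have := pc _ _ (mem0 _ h1 n1) (mem0 _ h2 n2) e12.
    have := pc _ _ (mem0 _ h2 n2) uS e23.
    by rewrite cu; case: (col x1); case: (col x2).
  rewrite /P cyc4_ins // in hc.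
  exact: (p4 x1 x2 x3 x4 (mem0 _ h1 n1) (mem0 _ h2 n2) (mem0 _ h3 n3) (mem0 _ h4 n4) hc).
- move=> x y hx hy exy.
  case: (eqVneq x v) => [Ex|nx].
    subst x; have Ey := nb y hy exy; subst y; rewrite /= ?eqxx ?(negbTE uv).
    by case: (col u).
  case: (eqVneq y v) => [Ey|ny].
    subst y; have Ex := nb' x hx exy; subst x; rewrite /= ?eqxx ?(negbTE uv).
    by case: (col u).
  rewrite /= ?(negbTE nx) ?(negbTE ny).
  exact: (pc x y (mem0 _ hx nx) (mem0 _ hy ny) exy).
Qed.

Lemma extend0 (T : finType) (e : rel T) (S0 : {set T}) pos col v :
  symmetric e -> irreflexive e ->
  Inv e S0 pos col -> v \notin S0 ->
  (forall y, y \in S0 -> ~~ e v y) ->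
  Inv e (v |: S0) (ins pos v 1) (fun x => if x == v then true else col x).
Proof.
move=> sym irr [inj cr p4 pc] vS nb0.
have nb : forall y, y \in v |: S0 -> e v y -> False.
  move=> y; rewrite in_setU1 => /orP [/eqP -> | hy]; first by rewrite irr.
  by move/negP: (nb0 y hy).
have nb' : forall y, y \in v |: S0 -> e y v -> False.
  by move=> y hy; rewrite sym; apply: nb.
have mem0 : forall x, x \in v |: S0 -> x != v -> x \in S0.
  by move=> x; rewrite in_setU1 => /orP [/eqP -> |//]; rewrite eqxx.
split.
- move=> x y hx hy; rewrite /ins.
  case: (eqVneq x v) => [->|xv]; case: (eqVneq y v) => [->|yv] //.
  + by move=> E; exfalso; lia.
  + by move=> E; exfalso; lia.
  + by move=> E; apply: inj; [exact: mem0|exact: mem0|lia].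
- move=> a c b d ha hc hb hd h4 hab hcd.
  case: (eqVneq a v) => [Ea|na]; first by subst a; case: (nb b hb hab).
  case: (eqVneq b v) => [Eb|nb1]; first by subst b; case: (nb' a ha hab).
  case: (eqVneq c v) => [Ec|nc]; first by subst c; case: (nb d hd hcd).
  case: (eqVneq d v) => [Ed|nd]; first by subst d; case: (nb' c hc hcd).
  rewrite cyc4_ins // in h4.
  exact: (cr a c b d (mem0 _ ha na) (mem0 _ hc nc) (mem0 _ hb nb1) (mem0 _ hd nd) h4 hab hcd).
- move=> x1 x2 x3 x4 h1 h2 h3 h4 hc e12 e23 e34.
  case: (eqVneq x1 v) => [E1|n1]; first by subst x1; case: (nb x2 h2 e12).
  case: (eqVneq x2 v) => [E2|n2]; first by subst x2; case: (nb x3 h3 e23).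
  case: (eqVneq x3 v) => [E3|n3]; first by subst x3; case: (nb x4 h4 e34).
  case: (eqVneq x4 v) => [E4|n4]; first by subst x4; case: (nb' x3 h3 e34).
  rewrite /= ?(negbTE n1); rewrite cyc4_ins // in hc.
  exact: (p4 x1 x2 x3 x4 (mem0 _ h1 n1) (mem0 _ h2 n2) (mem0 _ h3 n3) (mem0 _ h4 n4) hc).
- move=> x y hx hy exy.
  case: (eqVneq x v) => [Ex|nx]; first by subst x; case: (nb y hy exy).
  case: (eqVneq y v) => [Ey|ny]; first by subst y; case: (nb' x hx exy).
  rewrite /= ?(negbTE nx) ?(negbTE ny).
  exact: (pc x y (mem0 _ hx nx) (mem0 _ hy ny) exy).
Qed.


Lemma grow (T : finType) (e : rel T) (S : {set T}) :
  symmetric e -> irreflexive e -> forest e ->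
  (forall v, v \in S -> exists x y, [/\ x \in S, y \in S, e v x, e v y & x != y]) ->
  forall x0, x0 \in S ->
  forall n, exists x t, [/\ size t = n, uniq (x :: t), x \in S & path e x t].
Proof.
move=> sym irr F two x0 hx0; elim=> [|n [x [t [hs hu hx hp]]]].
  by exists x0, [::].
have [y [hy eyx hyt]] : exists y, [/\ y \in S, e x y & forall t0 t', t = t0 :: t' -> y != t0].
  have [y1 [y2 [h1 h2 e1 e2 n12]]] := two x hx.
  case: t {hs hu hp} => [|t0 t'].
    by exists y1; split => // ? ? [].
  case: (eqVneq y1 t0) => [E|ne].
    by exists y2; split => // ? ? [<- _]; rewrite -E eq_sym.
  by exists y1; split => // ? ? [<- _].
case: (boolP (y \in x :: t)) => hyin; last first.
  exists y, (x :: t); split => //=; first by rewrite hs.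
    by rewrite hyin.
  by rewrite sym eyx.
exfalso.
have yx : y != x by apply: contraTneq eyx => ->; rewrite irr.
move: hyin; rewrite inE (negbTE yx) /= => hyt'.
case/splitPr: hyt' hs hu hp hyt => t1 t2 hs hu hp hyt.
case: t1 hs hu hp hyt => [|z t1] hs hu hp hyt.
  by move: (hyt y t2 erefl); rewrite eqxx.
apply: F; exists (x :: rcons (z :: t1) y); split.
- by rewrite /= size_rcons.
- have E : x :: (z :: t1) ++ y :: t2 = (x :: rcons (z :: t1) y) ++ t2.
    by rewrite -cats1 /= -catA.
  by rewrite E cat_uniq in hu; case/and3P: hu.
- rewrite /cycle rcons_path last_rcons rcons_path.
  rewrite cat_path in hp; case/andP: hp => -> /= /andP [-> _].
  by rewrite sym eyx.
Qed.

Lemma leaf (T : finType) (e : rel T) (S : {set T}) :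
  symmetric e -> irreflexive e -> forest e -> S != set0 ->
  exists2 v, v \in S & (forall x y, x \in S -> y \in S -> e v x -> e v y -> x = y).
Proof.
move=> sym irr F /set0Pn [x0 hx0].
case: (boolP [exists v in S, ~~ [exists x in S, exists y in S, [&& e v x, e v y & x != y]]]).
  case/exists_inP => v hv H; exists v => // x y hx hy hvx hvy.
  apply/eqP; apply/negPn/negP => nxy; apply: (negP H).
  apply/exists_inP; exists x => //; apply/exists_inP; exists y => //.
  by rewrite hvx hvy.
move=> H.
have two : forall v, v \in S -> exists x y, [/\ x \in S, y \in S, e v x, e v y & x != y].
  move=> v hv; move: H => /exists_inPn /(_ v hv) /negPn /exists_inP [x hx].
  by case/exists_inP => y hy /and3P [h1 h2 h3]; exists x, y.
have [x [t [hs hu _ _]]] := grow sym irr F two hx0 #|T|.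
have := max_card (mem (x :: t)).
by rewrite (card_uniqP hu) /= hs ltnn.
Qed.


Lemma build (T : finType) (e : rel T) :
  symmetric e -> irreflexive e -> forest e ->
  forall n (S : {set T}), #|S| = n -> exists pos col, Inv e S pos col.
Proof.
move=> sym irr F; elim=> [|n IH] S hS.
  have S0 : S = set0 by apply/eqP; rewrite -cards_eq0 hS.
  exists (fun _ => 0), (fun _ => true); subst S.
  by split; move=> x; rewrite in_set0.
have nS : S != set0 by rewrite -card_gt0 hS.
have [v hv lf] := leaf sym irr F nS.
have hS0 : #|S :\ v| = n by move: hS; rewrite (cardsD1 v S) hv add1n => [[]].
have [pos [col I]] := IH _ hS0.
have vS : v \notin S :\ v by rewrite setD11.
rewrite -(setD1K hv).
case: (boolP [exists u in S :\ v, e v u]).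
  case/exists_inP => u hu evu.
  eexists; eexists; apply: (extend sym irr I vS hu evu).
  move=> y hy evy; apply: (lf y u) => //.
    by move: hy; rewrite in_setD1 => /andP [].
  by move: hu; rewrite in_setD1 => /andP [].
move/exists_inPn => H.
eexists; eexists; exact: (extend0 sym irr I vS H).
Qed.

Lemma dir2 (T : finType) (e : rel T) :
  symmetric e -> irreflexive e -> forest e -> admits_F_free_circular_ordering e.
Proof.
move=> sym irr F.
have [pos [col [inj cr p4 pc]]] := build sym irr F (erefl #|[set: T]|).
exists pos; split.
  by move=> x y; apply: inj; rewrite in_setT.
move=> P; rewrite !inE => /orP [/eqP->|/orP [/eqP->|/orP [/eqP->|/orP [/eqP->|
  /orP [/eqP->|/orP [/eqP->|/eqP->]]]]]] /= [f [finj fc fe]].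
- apply: F; exists [:: f (@Ordinal 3 0 isT); f (@Ordinal 3 1 isT); f (@Ordinal 3 2 isT)].
  split => //; first by rewrite /= !inE !(inj_eq finj).
  by rewrite /cycle /= !fe.
- apply: F; exists [:: f (@Ordinal 4 0 isT); f (@Ordinal 4 1 isT); f (@Ordinal 4 2 isT);
    f (@Ordinal 4 3 isT)].
  split => //; first by rewrite /= !inE !(inj_eq finj).
  by rewrite /cycle /= !fe.
- apply: F; exists [:: f (@Ordinal 4 0 isT); f (@Ordinal 4 1 isT); f (@Ordinal 4 3 isT);
    f (@Ordinal 4 2 isT)].
  split => //; first by rewrite /= !inE !(inj_eq finj).
  by rewrite /cycle /= !fe.
- apply: (cr (f (@Ordinal 4 0 isT)) (f (@Ordinal 4 1 isT)) (f (@Ordinal 4 2 isT))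
    (f (@Ordinal 4 3 isT))); rewrite ?in_setT ?fe //.
  by apply/and4P; split; apply: fc.
- apply: (cr (f (@Ordinal 4 0 isT)) (f (@Ordinal 4 1 isT)) (f (@Ordinal 4 2 isT))
    (f (@Ordinal 4 3 isT))); rewrite ?in_setT ?fe //.
  by apply/and4P; split; apply: fc.
- apply: F; exists [:: f (@Ordinal 5 0 isT); f (@Ordinal 5 1 isT); f (@Ordinal 5 2 isT);
    f (@Ordinal 5 3 isT); f (@Ordinal 5 4 isT)].
  split => //; first by rewrite /= !inE !(inj_eq finj).
  by rewrite /cycle /= !fe.
- set f0 := f (@Ordinal 5 0 isT); set f1 := f (@Ordinal 5 1 isT);
  set f2 := f (@Ordinal 5 2 isT); set f3 := f (@Ordinal 5 3 isT);
  set f4 := f (@Ordinal 5 4 isT).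
  have h0 : col f0.
    apply: (p4 f0 f1 f2 f3); rewrite ?in_setT ?fe //.
    by apply/and4P; split; apply: fc.
  have h1 : col f1.
    apply: (p4 f1 f2 f3 f4); rewrite ?in_setT ?fe //.
    by apply/and4P; split; apply: fc.
  have := pc f0 f1 (in_setT _) (in_setT _).
  by rewrite h0 h1 fe //; move/(_ isT).
Qed.

Theorem theorem4 (T : finType) (e : rel T) :
  symmetric e -> irreflexive e ->
  (admits_F_free_circular_ordering e <-> forest e).
Proof.
move=> sym irr; split.
  by case=> pos [inj H]; apply: (@dir1 _ e pos).
exact: dir2.
Qed.
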